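(* Let $d\ge2$, $p_c(z)=\bar z^d+c$, let $W$ be a hyperbolic component of odd period $k$ and let $c_0\in\partial W$ be a parameter for which $p_{c_0}$ has a simple parabolic orbit $z_0,\dots,z_{k-1}$. Let $\varphi_{c_0}$ be a local holomorphic coordinate near $z_0$ with $\varphi_{c_0}(z_0)=0$ and $\varphi_{c_0}\circ p_{c_0}^{\circ 2k}\circ\varphi_{c_0}^{-1}(\zeta)=\zeta+\zeta^2h(\zeta)$ with $h(0)=1$. Then for every $\varepsilon>0$ one can choose a neighborhood $V$ of $c_0$ in parameter space and a neighborhood $U$ of $z_0$ in the dynamical plane such that for every $c\in V$ there is a holomorphic coordinate $\varphi_c:U\to\mathbb{C}$ and a number $a_c\in\mathbb{C}$ satisfying $$f_c(\zeta):=\varphi_c\circ p_c^{\circ 2k}\circ\varphi_c^{-1}(\zeta)=\zeta+(\zeta^2-a_c^2)h_c(\zeta)$$ with $h_c$ holomorphic and $|h_c(\zeta)-1|<\varepsilon$ for all $\zeta\in\varphi_c(U)$.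
   Context: A hyperbolic component of period $n$ is a connected component of the set of parameters $c$ for which $p_c$ has an attracting periodic orbit of period $n$. A periodic orbit of odd period $k$ is parabolic if $(p_c^{\circ2k})'=1$ at its points ($p_c^{\circ2k}$ is holomorphic), and simple if $p_c^{\circ2k}(z_0+w)=z_0+w+aw^2+O(w^3)$ with $a\ne0$. *)

(* Defs.v *)
From Stdlib Require Import Reals.
From Coquelicot Require Import Coquelicot.

Open Scope C_scope.

Definition pc (d : nat) (c : C) (z : C) : C := (Cconj z ^ d + c)%C.

Definition iter (n : nat) (f : C -> C) : C -> C := fun z => Nat.iter n f z.

Definition holo_on (f : C -> C) (U : C -> Prop) : Prop :=
  forall z, U z -> ex_derive f z.

Definition inj_on (f : C -> C) (U : C -> Prop) : Prop :=
  forall x y, U x -> U y -> f x = f y -> x = y.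

Definition img (f : C -> C) (U : C -> Prop) : C -> Prop :=
  fun w => exists z, U z /\ f z = w.

Definition exact_period (f : C -> C) (n : nat) (z : C) : Prop :=
  (0 < n)%nat /\ iter n f z = z /\
  (forall j, (0 < j)%nat -> (j < n)%nat -> iter j f z <> z).

(* attracting periodic point of period n of p_c: the multiplier of the
   holomorphic map p_c^{2n} at z has modulus < 1 *)
Definition attracting_pt (d : nat) (c : C) (n : nat) (z : C) : Prop :=
  exact_period (pc d c) n z /\
  exists l : C, is_derive (iter (2 * n) (pc d c)) z l /\ (Cmod l < 1)%R.

Definition has_attracting (d n : nat) (c : C) : Prop :=
  exists z, attracting_pt d c n z.

Definition connected_set (S : C -> Prop) : Prop :=
  forall A B : C -> Prop, open A -> open B ->
    (forall x, S x -> A x \/ B x) ->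
    (exists x, S x /\ A x) -> (exists x, S x /\ B x) ->
    exists x, S x /\ A x /\ B x.

(* W is a connected component of {c | p_c has an attracting orbit of period n} *)
Definition hyperbolic_component (d n : nat) (W : C -> Prop) : Prop :=
  exists c1, has_attracting d n c1 /\
    forall c, W c <-> exists S, connected_set S /\
        (forall x, S x -> has_attracting d n x) /\ S c1 /\ S c.

Definition in_boundary (W : C -> Prop) (c : C) : Prop :=
  (forall e : R, (0 < e)%R -> exists x, W x /\ (Cmod (x - c) < e)%R) /\
  (forall e : R, (0 < e)%R -> exists x, ~ W x /\ (Cmod (x - c) < e)%R).

Definition simple_parabolic (d : nat) (c : C) (k : nat) (z0 : C) : Prop :=
  exact_period (pc d c) k z0 /\
  is_derive (iter (2 * k) (pc d c)) z0 (RtoC 1) /\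
  exists a : C, a <> RtoC 0 /\
    exists M r : R, (0 < r)%R /\
      forall w : C, (Cmod w < r)%R ->
        (Cmod (iter (2 * k) (pc d c) (z0 + w) - (z0 + w + a * w ^ 2))
           <= M * Cmod w ^ 3)%R.

(* Main.v *)
Require Import Defs.
From Stdlib Require Import Reals Lra FunctionalExtensionality.
From Coquelicot Require Import Coquelicot.
From mathcomp Require Import ssreflect ssrfun ssrbool.

Lemma sqrt2_lt2 : Rlt (sqrt 2) 2.
Proof.
rewrite -[X in Rlt _ X]sqrt_square; last by lra.
apply: sqrt_lt_1_alt; split; lra.
Qed.

Lemma open_cball (z0 : C) (rho : R) : open (fun z : C => Rlt (Cmod (Cminus z z0)) rho).
Proof.
move=> z Hz.
have hm : Rlt 0 (Rdiv (Rminus rho (Cmod (Cminus z z0))) 2).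
  by unfold Rdiv; lra.
exists (mkposreal _ hm) => y [H1 H2] /=.
move: H1 H2; rewrite /ball /= /AbsRing_ball /abs /minus /plus /opp /= => H1 H2.
have T : Rle (Cmod (Cminus y z0)) (Rplus (Cmod (Cminus y z)) (Cmod (Cminus z z0))).
  have -> : Cminus y z0 = Cplus (Cminus y z) (Cminus z z0) by rewrite /Cminus; ring.
  exact: Cmod_triangle.
have M := Cmod_2Rmax (Cminus y z).
have Hmax : Rlt (Rmax (Rabs (fst (Cminus y z))) (Rabs (snd (Cminus y z))))
                (Rdiv (Rminus rho (Cmod (Cminus z z0))) 2).
  by apply: Rmax_lub_lt.
have S2 := sqrt2_lt2.
have S0 : Rle 0 (sqrt 2) by apply: sqrt_pos.
have P : Rle (Rmult (sqrt 2) (Rmax (Rabs (fst (Cminus y z))) (Rabs (snd (Cminus y z)))))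
             (Rmult 2 (Rmax (Rabs (fst (Cminus y z))) (Rabs (snd (Cminus y z))))).
  apply: Rmult_le_compat_r; last by apply: Rlt_le.
  apply: Rle_trans (Rmax_l _ _); exact: Rabs_pos.
unfold Rdiv in *; lra.
Qed.

From mathcomp Require Import all_boot all_order all_algebra.
From mathcomp.real_closed Require Import complex.
From mathcomp Require Import Rstruct.
From mathcomp Require Import lra ring zify.
From Stdlib Require Import Lia.
Import Order.TTheory GRing.Theory Num.Theory.
Local Open Scope ring_scope.
Notation Ri := (complex R).

Definition toRi (z : C) : Ri := Complex (fst z) (snd z).
Definition frRi (x : Ri) : C := (complex.Re x, complex.Im x).

Lemma toRiK z : frRi (toRi z) = z. Proof. by case: z. Qed.
Lemma frRiK x : toRi (frRi x) = x. Proof. by case: x. Qed.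
Lemma toRi_inj : injective toRi.
Proof. by move=> x y h; rewrite -(toRiK x) h toRiK. Qed.

Lemma toRiD x y : toRi (Cplus x y) = toRi x + toRi y.
Proof. by case: x; case: y. Qed.
Lemma toRiM x y : toRi (Cmult x y) = toRi x * toRi y.
Proof. by case: x; case: y. Qed.
Lemma toRiN x : toRi (Copp x) = - toRi x.
Proof. by case: x. Qed.
Lemma toRiB x y : toRi (Cminus x y) = toRi x - toRi y.
Proof. by case: x; case: y. Qed.
Lemma toRiJ x : toRi (Cconj x) = conjc (toRi x).
Proof. by case: x. Qed.
Lemma toRiR r : toRi (RtoC r) = Complex r 0.
Proof. by []. Qed.
Lemma toRi1 : toRi (RtoC 1) = 1.
Proof. by []. Qed.
Lemma toRi0 : toRi (RtoC 0) = 0.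
Proof. by []. Qed.
Lemma toRiX x n : toRi (Cpow x n) = toRi x ^+ n.
Proof. by elim: n => [|n IH] //=; rewrite toRiM IH exprS. Qed.

Lemma frRiD x y : frRi (x + y) = Cplus (frRi x) (frRi y).
Proof. by apply: toRi_inj; rewrite toRiD !frRiK. Qed.
Lemma frRiM x y : frRi (x * y) = Cmult (frRi x) (frRi y).
Proof. by apply: toRi_inj; rewrite toRiM !frRiK. Qed.

Definition nrm (x : Ri) : R := Cmod (frRi x).

Lemma nrm_ge0 x : 0 <= nrm x.
Proof. apply/RleP; exact: Cmod_ge_0. Qed.
Lemma nrmM x y : nrm (x * y) = nrm x * nrm y.
Proof. by rewrite /nrm frRiM Cmod_mult. Qed.
Lemma nrmD x y : nrm (x + y) <= nrm x + nrm y.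
Proof. by rewrite /nrm frRiD; apply/RleP; apply: Cmod_triangle. Qed.
Lemma nrm0 : nrm 0 = 0.
Proof. by rewrite /nrm /frRi /= Cmod_0. Qed.
Lemma nrm1 : nrm 1 = 1.
Proof. by rewrite /nrm /frRi /= Cmod_1. Qed.
Lemma nrmN x : nrm (- x) = nrm x.
Proof. rewrite /nrm; have -> : frRi (- x) = Copp (frRi x) by case: x. exact: Cmod_opp. Qed.
Lemma nrm_eq0 x : nrm x = 0 -> x = 0.
Proof. rewrite /nrm => h; have h2 := Cmod_eq_0 _ h. by rewrite -(frRiK x) h2. Qed.
Lemma nrmX x n : nrm (x ^+ n) = nrm x ^+ n.
Proof. by elim: n => [|n IH]; rewrite ?nrm1 // exprS nrmM IH exprS. Qed.
Lemma nrmB x y : nrm (x - y) <= nrm x + nrm y.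
Proof. by rewrite -(nrmN y); apply: nrmD. Qed.
Lemma nrmBC x y : nrm (x - y) = nrm (y - x).
Proof. by rewrite -nrmN opprB. Qed.
Lemma nrm_tri x y z : nrm (x - z) <= nrm (x - y) + nrm (y - z).
Proof. by have := nrmD (x - y) (y - z); rewrite addrA subrK. Qed.
Lemma nrm_lb x y : nrm x - nrm y <= nrm (x + y).
Proof. have := nrmD (x + y) (- y); rewrite addrK nrmN; lra. Qed.
Lemma nrm_real r : nrm (Complex r 0) = `|r|.
Proof. rewrite /nrm /frRi /=. exact: Cmod_R. Qed.
Lemma nrm_gt0 x : x != 0 -> 0 < nrm x.
Proof.
move=> hx; rewrite lt_neqAle nrm_ge0 andbT; apply/eqP=> h.
by move/eqP: hx; apply; apply: nrm_eq0.
Qed.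
Lemma nrmV x : nrm (x^-1) = (nrm x)^-1.
Proof.
have [->|hx] := eqVneq x 0; first by rewrite invr0 nrm0 invr0.
have : nrm (x^-1) * nrm x = 1 by rewrite -nrmM mulVf // nrm1.
move=> h; rewrite -[LHS]mulr1 -(mulfV (x:=nrm x)) ?mulrA ?h ?mul1r //.
by rewrite gt_eqF // nrm_gt0.
Qed.

Definition cont_at (f : Ri -> Ri) (x0 : Ri) := forall e : R, 0 < e ->
  exists2 dl : R, 0 < dl & forall x, nrm (x - x0) < dl -> nrm (f x - f x0) < e.

Section Cont.
Variable x0 : Ri.

Lemma cont_ext f g : (forall x, f x = g x) -> cont_at f x0 -> cont_at g x0.
Proof.
move=> E hf e he; have [d hd H] := hf e he; exists d => // x hx.
by rewrite -!E; apply: H.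
Qed.

Lemma cont_const a : cont_at (fun _ => a) x0.
Proof. by move=> e he; exists 1 => // x _; rewrite subrr nrm0. Qed.

Lemma cont_id : cont_at id x0.
Proof. by move=> e he; exists e. Qed.

Lemma nrm_conj x : nrm (conjc x) = nrm x.
Proof.
rewrite /nrm; have -> : frRi (conjc x) = Cconj (frRi x) by case: x.
exact: Cmod_conj.
Qed.

Lemma cont_conj : cont_at conjc x0.
Proof. move=> e he; exists e => // x; by rewrite -rmorphB nrm_conj. Qed.

Lemma cont_add f g : cont_at f x0 -> cont_at g x0 -> cont_at (fun x => f x + g x) x0.
Proof.
move=> hf hg e he.
have he2 : 0 < e / 2 by lra.
have [d1 hd1 H1] := hf _ he2; have [d2 hd2 H2] := hg _ he2.
exists (Num.min d1 d2); first by rewrite lt_min hd1 hd2.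
move=> x; rewrite lt_min => /andP[h1 h2].
have := H1 _ h1; have := H2 _ h2.
have -> : f x + g x - (f x0 + g x0) = (f x - f x0) + (g x - g x0) by ring.
have := nrmD (f x - f x0) (g x - g x0); lra.
Qed.

Lemma cont_opp f : cont_at f x0 -> cont_at (fun x => - f x) x0.
Proof.
move=> hf e he; have [d hd H] := hf _ he; exists d => // x hx.
by rewrite -opprD nrmN; apply: H.
Qed.

Lemma cont_mul f g : cont_at f x0 -> cont_at g x0 -> cont_at (fun x => f x * g x) x0.
Proof.
move=> hf hg e he.
move: (nrm_ge0 (f x0)) (nrm_ge0 (g x0)).
move Ea: (nrm (f x0)) => A; move Eb: (nrm (g x0)) => B hA hB.
have hef : 0 < e / (2 * (B + 1)) by apply: divr_gt0; lra.
have heg0 : 0 < e / (2 * (A + 1)) by apply: divr_gt0; lra.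
have heg : 0 < Num.min 1 (e / (2 * (A + 1))) by rewrite lt_min heg0 andbT; lra.
have [d1 hd1 H1] := hf _ hef; have [d2 hd2 H2] := hg _ heg.
exists (Num.min d1 d2); first by rewrite lt_min hd1 hd2.
move=> x; rewrite lt_min => /andP[h1 h2].
have F1 := H1 _ h1; have G1 := H2 _ h2.
move: G1; rewrite lt_min => /andP[G1 G2].
have -> : f x * g x - f x0 * g x0 = (f x - f x0) * g x + f x0 * (g x - g x0) by ring.
apply: (le_lt_trans (nrmD _ _)); rewrite !nrmM.
have hgx : nrm (g x) <= B + 1.
  have := nrmD (g x - g x0) (g x0); rewrite subrK Eb; lra.
have P1 : nrm (f x - f x0) * nrm (g x) < e / (2 * (B + 1)) * (B + 1).
  apply: (le_lt_trans (y := nrm (f x - f x0) * (B + 1))).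
    by apply: ler_wpM2l => //; exact: nrm_ge0.
  by rewrite ltr_pM2r //; lra.
have P2 : A * nrm (g x - g x0) <= A * (e / (2 * (A + 1))).
  by apply: ler_wpM2l => //; apply: ltW.
have E1 : e / (2 * (B + 1)) * (B + 1) = e / 2.
  by field; lra.
have E2 : A * (e / (2 * (A + 1))) <= e / 2.
  rewrite mulrA ler_pdivrMr; last lra.
  have : A * e <= (A + 1) * e by apply: ler_wpM2r; lra.
  lra.
rewrite Ea; lra.
Qed.

Lemma cont_sum n (F : 'I_n -> Ri -> Ri) :
  (forall i, cont_at (F i) x0) -> cont_at (fun x => \sum_(i < n) F i x) x0.
Proof.
elim: n F => [|n IH] F hF.
  apply: (cont_ext (fun _ => 0)); first by move=> x; rewrite big_ord0.
  exact: cont_const.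
apply: (cont_ext (fun x => \sum_(i < n) F (widen_ord (leqnSn n) i) x + F ord_max x)).
  by move=> x; rewrite big_ord_recr.
apply: cont_add; last exact: hF.
exact: (IH (fun i => F (widen_ord (leqnSn n) i))).
Qed.

Definition pcont (P : Ri -> {poly Ri}) := forall j, cont_at (fun c => (P c)`_j) x0.

Lemma pcont_const p : pcont (fun _ => p).
Proof. by move=> j; apply: cont_const. Qed.

Lemma pcont_add P Q : pcont P -> pcont Q -> pcont (fun c => P c + Q c).
Proof.
move=> hP hQ j; apply: (cont_ext (fun c => (P c)`_j + (Q c)`_j)).
  by move=> x; rewrite coefD.
exact: cont_add.
Qed.

Lemma pcont_sub P Q : pcont P -> pcont Q -> pcont (fun c => P c - Q c).
Proof.
move=> hP hQ j; apply: (cont_ext (fun c => (P c)`_j + - (Q c)`_j)).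
  by move=> x; rewrite coefB.
by apply: cont_add => //; apply: cont_opp.
Qed.

Lemma pcont_mul P Q : pcont P -> pcont Q -> pcont (fun c => P c * Q c).
Proof.
move=> hP hQ j.
apply: (cont_ext (fun c => \sum_(i < j.+1) (P c)`_i * (Q c)`_(j - i))).
  by move=> x; rewrite coefM.
have := @cont_sum j.+1 (fun (i : 'I_j.+1) c => (P c)`_i * (Q c)`_(j - i)).
apply => i; exact: cont_mul.
Qed.

Lemma pcont_exp P n : pcont P -> pcont (fun c => P c ^+ n).
Proof.
move=> hP; elim: n => [|n IH].
  move=> j; apply: (cont_ext (fun c => (1 : {poly Ri})`_j)).
    by move=> x; rewrite expr0.
  exact: cont_const.
move=> j; apply: (cont_ext (fun c => (P c * P c ^+ n)`_j)).
  by move=> x; rewrite exprS.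
exact: pcont_mul.
Qed.

Lemma pcont_C f : cont_at f x0 -> pcont (fun c => (f c)%:P).
Proof.
move=> hf j; apply: (cont_ext (fun c => if j == 0%N then f c else 0)).
  by move=> x; rewrite coefC.
case: (j == 0%N); first exact: hf. exact: cont_const.
Qed.

Lemma cont_fin (g : nat -> Ri -> Ri) n :
  (forall j, cont_at (g j) x0) -> forall e, 0 < e ->
  exists2 dl : R, 0 < dl & forall x, nrm (x - x0) < dl ->
     forall j, (j <= n)%N -> nrm (g j x - g j x0) < e.
Proof.
move=> hg e he; elim: n => [|n [d hd H]].
  have [d hd H] := hg 0%N e he; exists d => // x hx j; rewrite leqn0 => /eqP->.
  exact: H.
have [d' hd' H'] := hg n.+1 e he.
exists (Num.min d d'); first by rewrite lt_min hd hd'.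
move=> x; rewrite lt_min => /andP[h1 h2] j; rewrite leq_eqVlt => /orP[/eqP->|hj].
  exact: H'.
by apply: H.
Qed.

End Cont.

Definition step (d : nat) (c : Ri) (p : {poly Ri}) : {poly Ri} :=
  (p ^+ d + (conjc c)%:P) ^+ d + c%:P.
Definition Fsh d k c (z0 : Ri) := iter k (step d c) ('X + z0%:P).
Definition Gp d k c (z0 : Ri) := Fsh d k c z0 - ('X + z0%:P).

Lemma horner_step d c p x : (step d c p).[x] = (p.[x] ^+ d + conjc c) ^+ d + c.
Proof. by rewrite /step !hornerE. Qed.

Lemma toRi_pc d c z : toRi (pc d c z) = conjc (toRi z) ^+ d + toRi c.
Proof. by rewrite /pc toRiD toRiX toRiJ. Qed.

Lemma conjc_Xd (x y : Ri) n : conjc (conjc x ^+ n + y) = x ^+ n + conjc y.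
Proof.
have h1 : conjc (conjc x ^+ n + y) = conjc (conjc x ^+ n) + conjc y by apply: rmorphD.
have h2 : conjc (conjc x ^+ n) = conjc (conjc x) ^+ n by apply: rmorphXn.
by rewrite h1 h2 conjcK.
Qed.

Lemma horner_Fsh d n (c z : C) w :
  (Fsh d n (toRi c) (toRi z)).[w] =
  toRi (Nat.iter (2 * n) (pc d c) (frRi (toRi z + w))).
Proof.
elim: n => [|n IH].
  by rewrite /Fsh /= !hornerE frRiK addrC.
rewrite /Fsh iterS horner_step -/(Fsh d n _ _) IH.
have -> : (2 * n.+1 = (2 * n).+2)%N by rewrite mulnS.
have E : forall m y, Nat.iter m.+2 (pc d c) y = pc d c (pc d c (Nat.iter m (pc d c) y)) by [].
by rewrite E !toRi_pc conjc_Xd.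
Qed.

Lemma monic_addC (p : {poly Ri}) a : p \is monic -> (1 < size p)%N ->
  p + a%:P \is monic /\ size (p + a%:P) = size p.
Proof.
move=> hm hs.
have hlt : (size a%:P < size p)%N by apply: leq_ltn_trans (size_polyC_leq1 a) hs.
split; last by rewrite size_addl.
by rewrite monicE lead_coefDl // -monicE.
Qed.

Lemma monic_expS (p : {poly Ri}) n : p \is monic ->
  p ^+ n \is monic /\ (size (p ^+ n)).-1 = ((size p).-1 * n)%N.
Proof. by move=> hm; split; [apply: monic_exp | apply: size_exp]. Qed.

Lemma step_monic d c p : p \is monic -> (1 < size p)%N -> (1 < d)%N ->
  step d c p \is monic /\ (size (step d c p)).-1 = ((size p).-1 * d * d)%N.
Proof.
move=> hm hs hd.
have [m1 s1] := monic_expS _ d hm.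
have hs1 : (1 < size (p ^+ d))%N.
  move: s1 hs hd; set X := size _; set Y := size _ => e h1 h2; nia.
have [m2 s2] := monic_addC _ (conjc c) m1 hs1.
have [m3 s3] := monic_expS _ d m2.
have hs3 : (1 < size ((p ^+ d + (conjc c)%:P) ^+ d))%N.
  have e : ((size ((p ^+ d + (conjc c)%:P) ^+ d)).-1 = (size (p ^+ d)).-1 * d)%N.
    by rewrite s3 s2.
  move: e hs1 hd; set X := size _; set Y := size _ => e h1 h2; nia.
have [m4 s4] := monic_addC _ c m3 hs3.
rewrite /step; split => //; rewrite s4 s3 s2 s1; done.
Qed.

Lemma Fsh_monic d k c z0 : (1 < d)%N ->
  Fsh d k c z0 \is monic /\ (size (Fsh d k c z0)).-1 = ((d * d) ^ k)%N.
Proof.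
move=> hd; elim: k => [|k [hm hs]].
  by rewrite /Fsh /= monicXaddC size_XaddC.
rewrite /Fsh iterS -/(Fsh d k c z0).
have hs' : (1 < size (Fsh d k c z0))%N.
  have : (0 < (d * d) ^ k)%N by rewrite expn_gt0 muln_gt0; apply/orP; left; lia.
  rewrite -hs; lia.
have [m2 s2] := step_monic _ c _ hm hs' hd.
by split => //; rewrite s2 hs expnS; lia.
Qed.

Lemma Gp_monic d k c z0 : (1 < d)%N -> (0 < k)%N ->
  Gp d k c z0 \is monic /\ (size (Gp d k c z0)).-1 = ((d * d) ^ k)%N.
Proof.
move=> hd hk; have [hm hs] := Fsh_monic _ k c z0 hd.
have hge : (4 <= (d * d) ^ k)%N.
  have h4 : (4 <= d * d)%N by nia.
  case: k hk {hm hs} => // k _; rewrite expnS.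
  have : (0 < (d * d) ^ k)%N by rewrite expn_gt0 muln_gt0; apply/orP; left; lia.
  nia.
have hlt : (size (- ('X + z0%:P)) < size (Fsh d k c z0))%N.
  by rewrite size_opp size_XaddC; lia.
rewrite /Gp; split.
  by rewrite monicE lead_coefDl // -monicE.
by rewrite size_addl.
Qed.

Lemma Fsh_pcont d k c0 z0 : pcont c0 (fun c => Fsh d k c z0).
Proof.
elim: k => [|k IH]; first exact: pcont_const.
move=> j; apply: (cont_ext _ (fun c => (step d c (Fsh d k c z0))`_j)).
  by move=> x; rewrite /Fsh iterS.
have : pcont c0 (fun c => step d c (Fsh d k c z0)); last by apply.
rewrite /step; apply: pcont_add; last exact/pcont_C/cont_id.
apply: pcont_exp; apply: pcont_add; first exact: pcont_exp.
exact/pcont_C/cont_conj.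
Qed.

Lemma Gp_pcont d k c0 z0 : pcont c0 (fun c => Gp d k c z0).
Proof. by apply: pcont_sub; [exact: Fsh_pcont | exact: pcont_const]. Qed.

Lemma coefXsubCM0 (r : Ri) (p : {poly Ri}) : (('X - r%:P) * p)`_0 = - r * p`_0.
Proof. by rewrite mulrBl coefB coefXM coefCM /= sub0r mulNr. Qed.

Lemma coefXsubCMS (r : Ri) (p : {poly Ri}) j :
  (('X - r%:P) * p)`_j.+1 = p`_j - r * p`_j.+1.
Proof. by rewrite mulrBl coefB coefXM coefCM. Qed.

Lemma prod_coef_bound (s : seq Ri) (K : R) : 0 <= K ->
  (forall r, r \in s -> nrm r <= K) ->
  forall j, nrm ((\prod_(r <- s) ('X - r%:P))`_j) <= (1 + K) ^+ size s.
Proof.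
move=> hK; elim: s => [|r s IH] hs j.
  rewrite big_nil coefC /=; case: (j == 0%N); rewrite ?nrm1 ?nrm0 ?expr0 //.
have hr : nrm r <= K by apply: hs; rewrite inE eqxx.
have IH' : forall j, nrm ((\prod_(r <- s) ('X - r%:P))`_j) <= (1 + K) ^+ size s.
  by apply: IH => x hx; apply: hs; rewrite inE hx orbT.
set P := \prod_(r <- s) _ in IH' *.
have hB : 0 <= (1 + K) ^+ size s by apply: exprn_ge0; lra.
rewrite big_cons /= exprS.
have Hm : nrm (r * P`_j) <= K * (1 + K) ^+ size s.
  by rewrite nrmM; apply: ler_pM => //; apply: nrm_ge0.
case: j Hm => [|j] Hm.
  rewrite coefXsubCM0 mulNr nrmN; have := nrm_ge0 (r * P`_0); nra.
rewrite coefXsubCMS; have := nrmB (P`_j) (r * P`_j.+1).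
have := IH' j; have := nrm_ge0 (P`_j).
have Hm' : nrm (r * P`_j.+1) <= K * (1 + K) ^+ size s.
  by rewrite nrmM; apply: ler_pM => //; apply: nrm_ge0.
nra.
Qed.

Lemma nrm_sum n (F : 'I_n -> Ri) : nrm (\sum_(i < n) F i) <= \sum_(i < n) nrm (F i).
Proof.
elim: n F => [|n IH] F; first by rewrite !big_ord0 nrm0.
rewrite !big_ord_recr /=; apply: (le_trans (nrmD _ _)).
by rewrite lerD2r; apply: IH.
Qed.

Lemma nrm_prod (s : seq Ri) (f : Ri -> Ri) :
  nrm (\prod_(r <- s) f r) = \prod_(r <- s) nrm (f r).
Proof.
elim: s => [|r s IH]; first by rewrite !big_nil nrm1.
by rewrite !big_cons nrmM IH.
Qed.

Lemma root_bound (G : {poly Ri}) N (B : R) r : G \is monic -> size G = N.+1 ->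
  0 <= B -> (forall j, nrm G`_j <= B) -> root G r -> nrm r <= 1 + N%:R * B.
Proof.
move=> hm hs hB hG /rootP hr.
have hNB : 0 <= N%:R * B by apply: mulr_ge0 => //; apply: ler0n.
have [h1|h1] := leP (nrm r) 1; first by lra.
have lc : G`_N = 1 by move/monicP: hm; rewrite lead_coefE hs.
move: hr; rewrite horner_coef hs big_ord_recr /= lc mul1r => hr.
have E : r ^+ N = - \sum_(i < N) G`_i * r ^+ i.
  by apply/eqP; rewrite -subr_eq0 opprK addrC hr.
have hr0 : 0 < nrm r by lra.
case: N hs lc E {hNB hr} => [|M] hs lc E.
  by move: E; rewrite expr0 big_ord0 oppr0 => /eqP; rewrite oner_eq0.
have H1 : nrm r ^+ M.+1 <= M.+1%:R * B * nrm r ^+ M.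
  rewrite -nrmX E nrmN.
  have HS := nrm_sum _ (fun i : 'I_M.+1 => G`_i * r ^+ i).
  apply: (le_trans HS).
  have -> : M.+1%:R * B * nrm r ^+ M = \sum_(i < M.+1) (B * nrm r ^+ M).
    by rewrite sumr_const card_ord mulr_natl mulrnAl.
  apply: ler_sum => i _; rewrite nrmM nrmX; apply: ler_pM => //.
  - exact: nrm_ge0.
  - by apply: exprn_ge0; apply: nrm_ge0.
  - by apply: ler_weXn2l; [lra | rewrite -ltnS].
have hp : 0 < nrm r ^+ M by apply: exprn_gt0.
have H2 : nrm r * nrm r ^+ M <= (M.+1%:R * B) * nrm r ^+ M by rewrite -exprS.
have : nrm r <= M.+1%:R * B by rewrite -(ler_pM2r hp).
lra.
Qed.

Lemma prod_split (s : seq Ri) (P : pred Ri) (F : Ri -> {poly Ri}) :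
  \prod_(r <- s) F r =
  \prod_(r <- [seq x <- s | P x]) F r * \prod_(r <- [seq x <- s | ~~ P x]) F r.
Proof.
elim: s => [|r s IH]; first by rewrite /= !big_nil mulr1.
rewrite /=; case: (P r) => /=; rewrite !big_cons IH; first by rewrite mulrA.
by rewrite mulrCA.
Qed.

Lemma prod_ge_mu (L : seq Ri) (mu : R) : 0 <= mu ->
  (forall r, r \in L -> mu <= nrm r) ->
  mu ^+ size L <= nrm ((\prod_(r <- L) ('X - r%:P))`_0).
Proof.
move=> hmu hL; rewrite -horner_coef0 horner_prod nrm_prod.
elim: L hL => [|r L IH] hL; first by rewrite big_nil expr0.
rewrite big_cons /= exprS hornerXsubC sub0r nrmN.
apply: ler_pM => //; first by apply: exprn_ge0.
  by apply: hL; rewrite inE eqxx.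
by apply: IH => x hx; apply: hL; rewrite inE hx orbT.
Qed.

Lemma two_small_roots (s : seq Ri) (K mu : R) :
  0 <= K -> 0 < mu -> mu <= 1 ->
  (forall r, r \in s -> nrm r <= K) ->
  nrm ((\prod_(r <- s) ('X - r%:P))`_0) <
      (mu ^+ size s) ^+ 2 / (2 * (1 + K) ^+ size s) ->
  nrm ((\prod_(r <- s) ('X - r%:P))`_1) < mu ^+ size s / 2 ->
  exists r1 r2 (Q : {poly Ri}),
    \prod_(r <- s) ('X - r%:P) = ('X - r1%:P) * ('X - r2%:P) * Q /\
    nrm r1 < mu /\ nrm r2 < mu /\
    (forall j, nrm Q`_j <= (1 + K) ^+ size s) /\ (size Q <= size s)%N.
Proof.
move=> hK hmu hmu1 hs h0 h1.
move: h0 h1; set N := size s; set th := mu ^+ N; set BQ := (1 + K) ^+ N => h0 h1.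
have hth0 : 0 < th by apply: exprn_gt0.
have hth1 : th <= 1 by apply: exprn_ile1; lra.
have hBQ : 1 <= BQ by apply: exprn_ege1; lra.
pose P := fun r : Ri => nrm r < mu.
have Esplit := prod_split s P (fun r => 'X - r%:P).
move: Esplit; set S := [seq x <- s | P x]; set L := [seq x <- s | ~~ P x].
set PL := \prod_(r <- L) _ => Esplit.
have hsz : (size S + size L)%N = N by rewrite !size_filter count_predC.
have hL : forall r, r \in L -> mu <= nrm r.
  by move=> r; rewrite mem_filter /P => /andP[h _]; rewrite leNgt.
have hLs : forall r, r \in L -> r \in s by move=> r; rewrite mem_filter => /andP[].
have hSs : forall r, r \in S -> r \in s by move=> r; rewrite mem_filter => /andP[].
have hSm : forall r, r \in S -> nrm r < mu by move=> r; rewrite mem_filter => /andP[].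
have hPL0 : th <= nrm PL`_0.
  apply: (le_trans _ (prod_ge_mu _ _ (ltW hmu) hL)).
  apply: ler_wiXn2l; [lra | lra | ]; rewrite -hsz; apply: leq_addl.
have hPLb : forall j, nrm PL`_j <= BQ.
  move=> j; apply: (le_trans (prod_coef_bound _ _ hK (fun r h => hs r (hLs r h)) j)).
  apply: ler_weXn2l; [lra | ]; rewrite -hsz; apply: leq_addl.
have hkey : th ^+ 2 / (2 * BQ) <= th / 2.
  rewrite ler_pdivrMr; last lra.
  have e1 : th / 2 * (2 * BQ) = th * BQ by field.
  rewrite e1; have : th ^+ 2 <= th by rewrite expr2 ler_piMl //; lra.
  have : th <= th * BQ by rewrite ler_peMr //; lra.
  lra.
move: hSm hSs Esplit hsz; case: S => [|r1 [|r2 S']] hSm hSs Esplit hsz.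
- exfalso; move: h0; rewrite Esplit big_nil mul1r; lra.
- exfalso; move: h0 h1; rewrite Esplit big_cons big_nil mulr1.
  rewrite coefXsubCM0 coefXsubCMS mulNr nrmN nrmM => h0 h1.
  have hx : 0 <= nrm r1 by apply: nrm_ge0.
  have a1 : nrm r1 * th <= nrm r1 * nrm PL`_0 by apply: ler_wpM2l.
  have a2 : nrm r1 * th < th / 2 / BQ * th.
    apply: (le_lt_trans a1); apply: (lt_le_trans h0).
    have -> : th / 2 / BQ * th = th ^+ 2 / (2 * BQ) by field; lra.
    done.
  have a3 : nrm r1 < th / 2 / BQ by rewrite -(ltr_pM2r hth0).
  have a4 : nrm r1 * nrm PL`_1 <= nrm r1 * BQ by apply: ler_wpM2l.
  have a5 : nrm r1 * BQ < th / 2.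
    have : nrm r1 * BQ < th / 2 / BQ * BQ by rewrite ltr_pM2r //; lra.
    have -> : th / 2 / BQ * BQ = th / 2 by field; lra.
    done.
  have a6 := nrm_lb (PL`_0) (- (r1 * PL`_1)).
  rewrite nrmN nrmM in a6; lra.
- exists r1, r2, (\prod_(r <- S' ++ L) ('X - r%:P)).
  split.
    by rewrite Esplit !big_cons big_cat /= !mulrA.
  split; first by apply: hSm; rewrite inE eqxx.
  split; first by apply: hSm; rewrite !inE eqxx orbT.
  have hsz' : (size (S' ++ L) <= N)%N by rewrite size_cat -hsz /=; lia.
  split.
    move=> j; apply: (le_trans (prod_coef_bound _ _ hK _ j)).
      move=> r; rewrite mem_cat => /orP[h|h]; apply: hs.
        by apply: hSs; rewrite !inE h !orbT.
      exact: hLs.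
    by apply: ler_weXn2l; [lra | ].
  by rewrite size_prod_XsubC; move: hsz'; rewrite size_cat -hsz /=; lia.
Qed.

Lemma coef2_XsubC2 r1 r2 (Q : {poly Ri}) :
  (('X - r1%:P) * ('X - r2%:P) * Q)`_2 = Q`_0 - (r1 + r2) * Q`_1 + r1 * r2 * Q`_2.
Proof. rewrite -mulrA coefXsubCMS !coefXsubCMS; ring. Qed.

Lemma horner_rem (p : {poly Ri}) n (B : R) w : (size p <= n.+3)%N -> 0 <= B ->
  (forall j, nrm p`_j <= B) -> nrm w <= 1 ->
  nrm (p.[w] - (p`_0 + p`_1 * w + p`_2 * w ^+ 2)) <= n%:R * B * nrm w ^+ 3.
Proof.
move=> hs hB hp hw.
rewrite (horner_coef_wide _ hs) !big_ord_recl /= expr0 mulr1 expr1.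
set S := \sum_(i < n) _.
have -> : p`_0 + (p`_1 * w + (p`_2 * w ^+ 2 + S)) - (p`_0 + p`_1 * w + p`_2 * w ^+ 2) = S.
  by ring.
rewrite /S; apply: (le_trans (nrm_sum _ _)).
have -> : n%:R * B * nrm w ^+ 3 = \sum_(i < n) (B * nrm w ^+ 3).
  by rewrite sumr_const card_ord mulr_natl mulrnAl.
apply: ler_sum => i _; rewrite nrmM nrmX; apply: ler_pM.
- exact: nrm_ge0.
- by apply: exprn_ge0; apply: nrm_ge0.
- exact: hp.
- apply: ler_wiXn2l; [exact: nrm_ge0 | exact: hw | by rewrite /bump /=; lia].
Qed.

Definition rc (t : R) : Ri := Complex t 0.

Lemma nrm_rc t : 0 <= t -> nrm (rc t) = t.
Proof. by move=> ht; rewrite /rc nrm_real ger0_norm. Qed.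

Lemma vanish (x : Ri) (D t0 : R) : 0 < t0 ->
  (forall t, 0 < t -> t < t0 -> nrm x <= D * t) -> x = 0.
Proof.
move=> ht0 H; apply: nrm_eq0; apply/eqP; rewrite eq_le nrm_ge0 andbT.
have hD : 0 <= D.
  have h1 : 0 < t0 / 2 by lra.
  have h2 : t0 / 2 < t0 by lra.
  have h3 := H _ h1 h2; have := nrm_ge0 x; nra.
rewrite leNgt; apply/negP => hx.
pose t := Num.min (t0 / 2) (nrm x / (2 * (D + 1))).
have ht : 0 < t by rewrite lt_min; apply/andP; split; [lra | apply: divr_gt0; lra].
have ht1' : t <= t0 / 2 by rewrite /t ge_min lexx.
have ht1 : t < t0 by lra.
have ht2 : t <= nrm x / (2 * (D + 1)) by rewrite /t ge_min lexx orbT.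
have := H t ht ht1.
have : D * t <= (D + 1) * t by apply: ler_wpM2r; lra.
have : (D + 1) * t <= (D + 1) * (nrm x / (2 * (D + 1))) by apply: ler_wpM2l; lra.
have -> : (D + 1) * (nrm x / (2 * (D + 1))) = nrm x / 2 by field; lra.
lra.
Qed.

Lemma coef_le_sum (p : {poly Ri}) j : nrm p`_j <= \sum_(i < size p) nrm p`_i.
Proof.
have hge : forall i : 'I_(size p), 0 <= nrm p`_i by move=> i; apply: nrm_ge0.
case: (ltnP j (size p)) => hj.
  rewrite (bigD1 (Ordinal hj)) //= lerDl; apply: sumr_ge0 => i _; exact: hge.
by rewrite nth_default // nrm0; apply: sumr_ge0 => i _; exact: hge.
Qed.

Lemma taylor_coefs (p : {poly Ri}) (a : Ri) (M r : R) : 0 < r ->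
  (forall w, nrm w < r -> nrm (p.[w] - a * w ^+ 2) <= M * nrm w ^+ 3) ->
  p`_0 = 0 /\ p`_1 = 0 /\ p`_2 = a.
Proof.
move=> hr H.
set B := \sum_(i < size p) nrm p`_i.
have hB : 0 <= B by apply: sumr_ge0 => i _; apply: nrm_ge0.
have hpB : forall j, nrm p`_j <= B by move=> j; apply: coef_le_sum.
set n := size p.
have hn : (size p <= n.+3)%N by rewrite /n; lia.
set C := `|M| + n%:R * B.
have hC : 0 <= C by rewrite /C; apply: addr_ge0; [exact: normr_ge0 | apply: mulr_ge0 => //; apply: ler0n].
pose t0 := Num.min r 1.
have ht0 : 0 < t0 by rewrite lt_min hr ltr01.
set x0 := p`_0; set x1 := p`_1; set x2 := p`_2 - a.
have Hm : forall t, 0 < t -> t < t0 ->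
    nrm (x0 + x1 * rc t + x2 * rc t ^+ 2) <= C * t ^+ 3 /\ t < 1.
  move=> t ht htt; have ht1 : t < 1 by move: htt; rewrite lt_min => /andP[].
  have htr : t < r by move: htt; rewrite lt_min => /andP[].
  have hw : nrm (rc t) < r by rewrite nrm_rc //; lra.
  have h1 := H _ hw; rewrite nrm_rc in h1; last lra.
  have h2 := horner_rem _ _ _ (rc t) hn hB hpB; rewrite nrm_rc in h2; last lra.
  have h2' := h2 ltac:(lra).
  have -> : x0 + x1 * rc t + x2 * rc t ^+ 2 =
     (p.[rc t] - a * rc t ^+ 2) - (p.[rc t] - (p`_0 + p`_1 * rc t + p`_2 * rc t ^+ 2)).
    by rewrite /x0 /x1 /x2; ring.
  split => //; apply: (le_trans (nrmB _ _)).
  have : M * t ^+ 3 <= `|M| * t ^+ 3.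
    by apply: ler_wpM2r; [apply: exprn_ge0; lra | exact: ler_norm].
  rewrite /C mulrDl; lra.
have nt : forall t, 0 < t -> nrm (rc t) = t by move=> t ht; apply: nrm_rc; lra.
have E0 : x0 = 0.
  pose D := C + nrm x1 + nrm x2.
  apply: (vanish _ D _ ht0) => t ht htt; rewrite /D.
  have [h1 ht1] := Hm t ht htt.
  have h2 := nrmD (x0 + x1 * rc t + x2 * rc t ^+ 2) (- (x1 * rc t) - x2 * rc t ^+ 2).
  have e : x0 + x1 * rc t + x2 * rc t ^+ 2 + (- (x1 * rc t) - x2 * rc t ^+ 2) = x0 by ring.
  rewrite e in h2.
  have h3 := nrmB (- (x1 * rc t)) (x2 * rc t ^+ 2).
  rewrite nrmN !nrmM !nt // in h3.
  have t3 : t ^+ 3 <= t by rewrite -[X in _ <= X]expr1; apply: ler_wiXn2l; [lra | lra | by []].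
  have t2 : t ^+ 2 <= t by rewrite -[X in _ <= X]expr1; apply: ler_wiXn2l; [lra | lra | by []].
  have a1 : C * t ^+ 3 <= C * t by apply: ler_wpM2l.
  have a2 : nrm x2 * (t * t) <= nrm x2 * t.
    by apply: ler_wpM2l; [apply: nrm_ge0 | rewrite -expr2].
  lra.
have E1 : x1 = 0.
  pose D := C + nrm x2.
  apply: (vanish _ D _ ht0) => t ht htt; rewrite /D.
  have [h1 ht1] := Hm t ht htt.
  rewrite E0 add0r in h1.
  have e : x1 * rc t + x2 * rc t ^+ 2 = (x1 + x2 * rc t) * rc t by ring.
  rewrite e nrmM nt // in h1.
  have h1' : nrm (x1 + x2 * rc t) <= C * t ^+ 2.
    rewrite -(ler_pM2r ht) -mulrA -exprSr; done.
  have h3 := nrmB (x1 + x2 * rc t) (x2 * rc t).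
  rewrite nrmM nt // addrK in h3.
  have t2 : t ^+ 2 <= t by rewrite -[X in _ <= X]expr1; apply: ler_wiXn2l; [lra | lra | by []].
  have a1 : C * t ^+ 2 <= C * t by apply: ler_wpM2l.
  lra.
have E2 : x2 = 0.
  apply: (vanish _ (C) _ ht0) => t ht htt.
  have [h1 ht1] := Hm t ht htt.
  rewrite E0 E1 mul0r !add0r nrmM nrmX nt // in h1.
  have ht2 : 0 < t ^+ 2 by apply: exprn_gt0.
  have : nrm x2 * t ^+ 2 <= C * t * t ^+ 2 by rewrite -mulrA -exprS.
  by rewrite ler_pM2r.
split => //; split => //.
by apply/eqP; rewrite -subr_eq0; apply/eqP.
Qed.

Lemma horner_lin (p : {poly Ri}) n (B : R) w : (size p <= n.+1)%N -> 0 <= B ->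
  (forall j, nrm p`_j <= B) -> nrm w <= 1 ->
  nrm (p.[w] - p`_0) <= n%:R * B * nrm w.
Proof.
move=> hs hB hp hw.
rewrite (horner_coef_wide _ hs) big_ord_recl /= expr0 mulr1.
set S := \sum_(i < n) _.
have -> : p`_0 + S - p`_0 = S by ring.
apply: (le_trans (nrm_sum _ _)).
have -> : n%:R * B * nrm w = \sum_(i < n) (B * nrm w).
  by rewrite sumr_const card_ord mulr_natl mulrnAl.
apply: ler_sum => i _; rewrite nrmM nrmX; apply: ler_pM.
- exact: nrm_ge0.
- by apply: exprn_ge0; apply: nrm_ge0.
- exact: hp.
- rewrite -[X in _ <= X]expr1.
  apply: ler_wiXn2l; [exact: nrm_ge0 | exact: hw | by []].
Qed.

Lemma arith5 (y y123 y12 x1 x2 x3 x4 ea m : R) :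
  y <= y123 + x4 -> y123 <= y12 + x3 -> y12 <= x1 + x2 -> x1 < ea / 3 -> x2 < ea / 3 ->
  x3 <= 2 * m -> x4 <= m -> m <= ea / 10 -> 0 < ea -> y < ea.
Proof. move=> *; lra. Qed.

Theorem core (G : Ri -> {poly Ri}) (c0 : Ri) (N : nat) (a : Ri) (M r eps : R) :
  (2 <= N)%N ->
  (forall c, G c \is monic) -> (forall c, size (G c) = N.+1) -> pcont c0 G ->
  0 < r -> a != 0 -> 0 < eps ->
  (forall w, nrm w < r -> nrm ((G c0).[w] - a * w ^+ 2) <= M * nrm w ^+ 3) ->
  exists2 dl : R, 0 < dl & exists2 rho : R, 0 < rho & forall c, nrm (c - c0) < dl ->
    exists r1 r2 (Q : {poly Ri}), G c = ('X - r1%:P) * ('X - r2%:P) * Q /\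
      forall w, nrm w < rho -> nrm (Q.[w] - a) < eps * nrm a.
Proof.
move=> hN hm hs hc hr ha he hT.
have [g0 [g1 g2]] := taylor_coefs _ _ _ _ hr hT.
pose B0 := \sum_(i < N.+1) nrm (G c0)`_i.
have hB0 : 0 <= B0 by apply: sumr_ge0 => i _; apply: nrm_ge0.
pose B := B0 + 1.
have hB : 0 <= B by rewrite /B; lra.
pose K := 1 + N%:R * B.
have hK : 0 <= K by rewrite /K; have := mulr_ge0 (ler0n R N) hB; lra.
pose BQ := (1 + K) ^+ N.
have hBQ : 1 <= BQ by apply: exprn_ege1; lra.
pose ea := eps * nrm a.
have hea : 0 < ea by apply: mulr_gt0 => //; apply: nrm_gt0.
pose mu := Num.min 1 (ea / (10 * BQ)).
have hmu0 : 0 < mu by rewrite lt_min ltr01; apply: divr_gt0; lra.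
have hmu1 : mu <= 1 by rewrite /mu ge_min lexx.
have hmu2 : mu <= ea / (10 * BQ) by rewrite /mu ge_min lexx orbT.
pose th := mu ^+ N.
have hth : 0 < th by apply: exprn_gt0.
pose rho := Num.min 1 (ea / (3 * N.+1%:R * BQ)).
have hN1 : 0 < (N.+1%:R : R) by rewrite ltr0n.
have hrho0 : 0 < rho.
  by rewrite lt_min ltr01; apply: divr_gt0 => //; apply: mulr_gt0 => //; lra.
have hrho1 : rho <= 1 by rewrite /rho ge_min lexx.
have hrho2 : rho <= ea / (3 * N.+1%:R * BQ) by rewrite /rho ge_min lexx orbT.
pose t1 := th ^+ 2 / (2 * BQ).
have ht1 : 0 < t1 by apply: divr_gt0; [apply: exprn_gt0 | lra].
pose e := Num.min (Num.min 1 (ea / 3)) (Num.min t1 (th / 2)).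
have he0 : 0 < e.
  rewrite !lt_min ltr01 ht1 /=; apply/andP; split; lra.
have he1 : e <= 1 by rewrite /e !ge_min lexx.
have he2 : e <= ea / 3 by rewrite /e !ge_min lexx !orbT.
have he3 : e <= t1 by rewrite /e !ge_min lexx !orbT.
have he4 : e <= th / 2 by rewrite /e !ge_min lexx !orbT.
have [dl hdl Hdl] := cont_fin c0 (fun j c => (G c)`_j) N hc e he0.
exists dl => //; exists rho => // c hcd.
have Hc := Hdl c hcd.
have hGB : forall j, nrm (G c)`_j <= B.
  move=> j; case: (leqP j N) => hj.
    have h1 := Hc j hj.
    have h2 : nrm (G c0)`_j <= B0 by rewrite /B0 -(hs c0); apply: coef_le_sum.
    have h3 := nrmD ((G c)`_j - (G c0)`_j) (G c0)`_j.
    rewrite subrK in h3; apply: (le_trans h3); rewrite /B addrC.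
    by apply: lerD => //; apply: le_trans he1; apply: ltW.
  by rewrite nth_default ?hs // nrm0.
have hG0 : nrm (G c)`_0 < t1.
  by have := Hc 0%N (leq0n _); rewrite /= g0 subr0 => h; apply: lt_le_trans he3.
have hG1 : nrm (G c)`_1 < th / 2.
  by have := Hc 1%N (ltnW hN); rewrite /= g1 subr0 => h; apply: lt_le_trans he4.
have hG2 : nrm ((G c)`_2 - a) < ea / 3.
  by have := Hc 2%N hN; rewrite /= g2 => h; apply: lt_le_trans he2.
have [s Es] := closed_field_poly_normal (G c).
move: Es; rewrite (monicP (hm c)) scale1r => Es.
have hsz : size s = N.
  by have := size_prod_XsubC s id; rewrite -Es hs => -[].
have hroots : forall x, x \in s -> nrm x <= K.
  move=> x hx; apply: (root_bound _ _ _ _ (hm c) (hs c) hB hGB).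
  by rewrite Es root_prod_XsubC.
have [r1 [r2 [Q [EQ [h1 [h2 [hQ hQs]]]]]]] :
    exists r1 r2 (Q : {poly Ri}),
    \prod_(r <- s) ('X - r%:P) = ('X - r1%:P) * ('X - r2%:P) * Q /\
    nrm r1 < mu /\ nrm r2 < mu /\
    (forall j, nrm Q`_j <= (1 + K) ^+ size s) /\ (size Q <= size s)%N.
  apply: two_small_roots => //; rewrite -Es hsz //.
rewrite hsz -/BQ in hQ hQs.
exists r1, r2, Q; split; first by rewrite Es.
move=> w hw.
have hw1 : nrm w <= 1 by lra.
have L1 := horner_lin _ _ _ w (leqW hQs) (le_trans ler01 hBQ) hQ hw1.
have C2 := coef2_XsubC2 r1 r2 Q; rewrite -EQ -Es in C2.
have Eq : Q.[w] - a = (Q.[w] - Q`_0) + ((G c)`_2 - a) + (r1 + r2) * Q`_1 - r1 * r2 * Q`_2.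
  by rewrite C2; ring.
have b1 : nrm ((r1 + r2) * Q`_1) <= 2 * mu * BQ.
  rewrite nrmM; have := nrmD r1 r2 => h12.
  have h3 : nrm r1 + nrm r2 <= mu + mu by apply: lerD; apply: ltW.
  apply: ler_pM; [exact: nrm_ge0 | exact: nrm_ge0 | | exact: hQ].
  rewrite mulr_natl mulr2n.
  exact: le_trans h12 h3.
have b2 : nrm (r1 * r2 * Q`_2) <= mu * BQ.
  rewrite !nrmM.
  have h12 : nrm r1 * nrm r2 <= 1 * mu.
    by apply: ler_pM; [exact: nrm_ge0 | exact: nrm_ge0 | exact: (le_trans (ltW h1) hmu1) | exact: ltW].
  rewrite mul1r in h12.
  apply: ler_pM; [apply: mulr_ge0; exact: nrm_ge0 | exact: nrm_ge0 | exact: h12 | exact: hQ].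
have hBQ0 : 0 <= N%:R * BQ by apply: mulr_ge0; [apply: ler0n | apply: le_trans ler01 hBQ].
have hBQn : BQ != 0 by rewrite gt_eqF //; apply: lt_le_trans ltr01 hBQ.
have hN1n : N.+1%:R != 0 :> R by rewrite pnatr_eq0.
have b3 : nrm (Q.[w] - Q`_0) < ea / 3.
  apply: (le_lt_trans L1).
  have hNw : N%:R * BQ * nrm w <= N%:R * BQ * rho.
    by apply: ler_wpM2l => //; apply: ltW.
  apply: (le_lt_trans hNw).
  have hNr : N%:R * BQ * rho <= N%:R * BQ * (ea / (3 * N.+1%:R * BQ)).
    by apply: ler_wpM2l.
  apply: (le_lt_trans hNr).
  have hE : N%:R * BQ * (ea / (3 * N.+1%:R * BQ)) = (N%:R / N.+1%:R) * (ea / 3).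
    by field; rewrite hBQn andbT addrC natr1.
  rewrite hE -[X in _ < X]mul1r ltr_pM2r; last by apply: divr_gt0.
  by rewrite ltr_pdivrMr // mul1r ltr_nat.
have b4 : mu * BQ <= ea / 10.
  have : mu * BQ <= ea / (10 * BQ) * BQ.
    by apply: ler_wpM2r => //; apply: le_trans ler01 hBQ.
  have -> : ea / (10 * BQ) * BQ = ea / 10 by field; rewrite hBQn.
  done.
rewrite Eq.
have n1 := nrmD (Q.[w] - Q`_0 + ((G c)`_2 - a) + (r1 + r2) * Q`_1) (- (r1 * r2 * Q`_2)).
have n2 := nrmD (Q.[w] - Q`_0 + ((G c)`_2 - a)) ((r1 + r2) * Q`_1).
have n3 := nrmD (Q.[w] - Q`_0) ((G c)`_2 - a).
rewrite nrmN in n1.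
rewrite -mulrA in b1.
have H := arith5 _ _ _ _ _ _ _ _ _ n1 n2 n3 b3 hG2 b1 b2 b4 hea.
exact H.
Qed.

Lemma ex_derive_polyA (p : {poly Ri}) (z : C) : exists l,
  @is_derive C_AbsRing (AbsRing_NormedModule C_AbsRing) (fun x : C => frRi p.[toRi x]) z l.
Proof.
elim/poly_ind: p => [|q c IH].
  exists (@zero (AbsRing_NormedModule C_AbsRing)).
  apply: (@is_derive_ext C_AbsRing (AbsRing_NormedModule C_AbsRing) (fun _ => frRi 0)); last first.
    exact: is_derive_const.
  by move=> t /=; rewrite horner0.
case: IH => l Hl.
have H1 := @is_derive_mult C_AbsRing (fun x => frRi q.[toRi x]) (fun x => x) z l
   (@Hierarchy.one C_AbsRing) Hl (@is_derive_id C_AbsRing z) Cmult_comm.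
have H2 := @is_derive_plus C_AbsRing (AbsRing_NormedModule C_AbsRing) _ (fun _ => frRi c) z _ _ H1
   (@is_derive_const C_AbsRing (AbsRing_NormedModule C_AbsRing) (frRi c) z).
eexists; apply: (@is_derive_ext C_AbsRing (AbsRing_NormedModule C_AbsRing) _ _ _ _ _ H2).
by move=> t /=; rewrite hornerMXaddC frRiD frRiM toRiK.
Qed.

Lemma ex_derive_poly (p : {poly Ri}) (z : C) :
  ex_derive (fun x : C => frRi p.[toRi x]) z.
Proof.
have [l Hl] := ex_derive_polyA p z.
have H := @is_derive_scal_l C_AbsRing C_NormedModule _ z l (RtoC 1) Hl.
eexists; apply: (@is_derive_ext C_AbsRing C_NormedModule _ _ _ _ _ H).
move=> t /=; exact: Cmult_1_r.
Qed.


Lemma nrm_toRi y : nrm (toRi y) = Cmod y.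
Proof. by rewrite /nrm toRiK. Qed.

Lemma toRiC2 (x : C) : toRi (Cpow x 2) = toRi x ^+ 2.
Proof. exact: toRiX. Qed.


Lemma iter_Defs n (f : C -> C) z : Defs.iter n f z = Nat.iter n f z.
Proof. by []. Qed.

Lemma N_ge2 d k : (1 < d)%N -> (0 < k)%N -> (2 <= (d * d) ^ k)%N.
Proof.
move=> hd; case: k => // k _; rewrite expnS.
have : (0 < (d * d) ^ k)%N by rewrite expn_gt0 muln_gt0; apply/orP; left; lia.
nia.
Qed.

Lemma final_core (d k : nat) (c0 z0 a : C) (M r eps : R) :
  (1 < d)%N -> (0 < k)%N -> Rlt 0 r -> a <> RtoC 0 -> Rlt 0 eps ->
  (forall w : C, Rlt (Cmod w) r ->
     Rle (Cmod (Cminus (Defs.iter (2 * k) (pc d c0) (Cplus z0 w))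
                       (Cplus (Cplus z0 w) (Cmult a (Cpow w 2)))))
         (Rmult M (pow (Cmod w) 3))) ->
  exists (V U : C -> Prop), open V /\ V c0 /\ open U /\ U z0 /\
    forall c, V c -> exists (phi h : C -> C) (aa : C),
      holo_on phi U /\ inj_on phi U /\ holo_on h (img phi U) /\
      (forall z, U z -> U (Defs.iter (2 * k) (pc d c) z) ->
         phi (Defs.iter (2 * k) (pc d c) z) =
         Cplus (phi z) (Cmult (Cminus (Cpow (phi z) 2) (Cpow aa 2)) (h (phi z)))) /\
      (forall z, U z -> Rlt (Cmod (Cminus (h (phi z)) (RtoC 1))) eps).
Proof.
move=> hd hk hr ha heps HT.
pose z0' := toRi z0; pose c0' := toRi c0; pose A := toRi a.
pose G := fun c : Ri => Gp d k c z0'.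
pose N := ((d * d) ^ k)%N.
have hN : (2 <= N)%N by apply: N_ge2.
have hm : forall c, G c \is monic by move=> c; have [] := Gp_monic d k c z0' hd hk.
have hs : forall c, size (G c) = N.+1.
  move=> c; have [m1 s1] := Gp_monic d k c z0' hd hk.
  have : size (G c) != 0%N by rewrite size_poly_eq0 monic_neq0.
  by rewrite /N -s1 /G => h; rewrite prednK // lt0n.
have hc : pcont c0' G by apply: Gp_pcont.
have hr' : 0 < r by apply/RltP.
have ha' : A != 0.
  apply/eqP => h; apply: ha; rewrite -(toRiK a) -/A h; done.
have he' : 0 < eps by apply/RltP.
have hT : forall w, nrm w < r -> nrm ((G c0').[w] - A * w ^+ 2) <= M * nrm w ^+ 3.
  move=> w hw.
  have hw' : Rlt (Cmod (frRi w)) r by apply/RltP.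
  have := HT _ hw'; rewrite iter_Defs -RpowE => /RleP.
  rewrite -/(nrm w) -nrm_toRi; congr (nrm _ <= _).
  rewrite toRiB !toRiD toRiM toRiC2 frRiK /G /Gp hornerD hornerN !hornerE.
  have := horner_Fsh d k c0 z0 w.
  rewrite -/z0' -/c0' => ->; rewrite frRiD toRiK.
  rewrite /A /z0'; ring.
have [dl hdl [rho hrho Hcore]] := core _ _ _ _ _ _ _ hN hm hs hc hr' ha' he' hT.
have hc0 : forall (x : C) (e : R), Rlt 0 e -> Rlt (Cmod (Cminus x x)) e.
  by move=> x e he; rewrite /Cminus Cplus_opp_r Cmod_0.
exists (fun c => Rlt (Cmod (Cminus c c0)) dl), (fun z => Rlt (Cmod (Cminus z z0)) rho).
split; first exact: open_cball.
split; first by apply: hc0; apply/RltP.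
split; first exact: open_cball.
split; first by apply: hc0; apply/RltP.
move=> c Vc.
have hcd : nrm (toRi c - c0') < dl by rewrite -toRiB nrm_toRi; apply/RltP.
have [r1 [r2 [Q [EG HQ]]]] := Hcore _ hcd.
pose m := (r1 + r2) / 2; pose dlt := (r1 - r2) / 2.
pose Pphi := A%:P * ('X - (z0' + m)%:P).
pose Ph := (Q \Po (A^-1%:P * 'X + m%:P)) * (A^-1)%:P.
exists (fun z => frRi Pphi.[toRi z]), (fun z => frRi Ph.[toRi z]), (frRi (A * dlt)).
have Ephi : forall z, Pphi.[toRi z] = A * (toRi z - (z0' + m)).
  by move=> z; rewrite /Pphi !hornerE.
have Eh : forall x, Ph.[x] = Q.[A^-1 * x + m] * A^-1.
  by move=> x; rewrite /Ph hornerM horner_comp !hornerE.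
have Ew : forall z, A^-1 * (A * (toRi z - (z0' + m))) + m = toRi z - z0'.
  by move=> z; rewrite mulKf //; ring.
split; first by move=> z _; apply: ex_derive_poly.
split.
  move=> x y _ _ /(congr1 toRi); rewrite !frRiK !Ephi => /(mulfI ha') E.
  apply: toRi_inj; have := congr1 (fun t => t + (z0' + m)) E; rewrite /= !subrK; done.
split; first by move=> z _; apply: ex_derive_poly.
split.
  move=> z _ _; apply: toRi_inj.
  rewrite toRiD toRiM toRiB !toRiC2 !frRiK !Ephi Eh Ew.
  set w := toRi z - z0'.
  have HF := horner_Fsh d k c z0 w.
  have Ez : frRi (toRi z0 + w) = z by rewrite /w addrC subrK toRiK.
  rewrite Ez in HF.
  have E' := congr1 (fun p => p.[w]) EG.
  rewrite /= /G /Gp hornerD hornerN !hornerE in E'.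
  have EF : toRi (Nat.iter (2 * k) (pc d c) z) = (w - r1) * (w - r2) * Q.[w] + w + z0'.
    rewrite -HF -E'; ring.
  rewrite iter_Defs EF /w /m /dlt; field.
  exact: ha'.
move=> z hz.
rewrite -nrm_toRi toRiB !frRiK Ephi Eh Ew toRi1.
have hw : nrm (toRi z - z0') < rho by rewrite -toRiB nrm_toRi; apply/RltP.
have H := HQ _ hw.
have -> : Q.[toRi z - z0'] * A^-1 - 1 = (Q.[toRi z - z0'] - A) * A^-1.
  by field.
rewrite nrmM nrmV; apply/RltP.
have hA : 0 < nrm A by apply: nrm_gt0.
by rewrite ltr_pdivrMr.
Qed.

Close Scope ring_scope.
Open Scope R_scope.
Open Scope C_scope.

Theorem proposition4p1 :
  forall (d : nat) (k : nat) (W : C -> Prop) (c0 z0 : C)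
    (phi0 h0 : C -> C) (U0 : C -> Prop),
    (2 <= d)%coq_nat ->
    Nat.odd k = true ->
    hyperbolic_component d k W ->
    in_boundary W c0 ->
    simple_parabolic d c0 k z0 ->
    open U0 -> U0 z0 -> holo_on phi0 U0 -> inj_on phi0 U0 ->
    phi0 z0 = RtoC 0 ->
    holo_on h0 (img phi0 U0) -> h0 (RtoC 0) = RtoC 1 ->
    (forall z, U0 z -> U0 (Defs.iter (2 * k)%coq_nat (pc d c0) z) ->
       phi0 (Defs.iter (2 * k)%coq_nat (pc d c0) z) = phi0 z + phi0 z ^ 2 * h0 (phi0 z)) ->
    forall eps : R, Rlt 0 eps ->
    exists (V U : C -> Prop),
      open V /\ V c0 /\ open U /\ U z0 /\
      forall c, V c ->
        exists (phi h : C -> C) (a : C),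
          holo_on phi U /\ inj_on phi U /\ holo_on h (img phi U) /\
          (forall z, U z -> U (Defs.iter (2 * k)%coq_nat (pc d c) z) ->
             phi (Defs.iter (2 * k)%coq_nat (pc d c) z)
               = phi z + (phi z ^ 2 - a ^ 2) * h (phi z)) /\
          (forall z, U z -> Rlt (Cmod (h (phi z) - RtoC 1)) eps).
Proof.
move=> d k W c0 z0 phi0 h0 U0 Hd Hk _ _ [_ [_ [a [Ha [M [r [Hr HT]]]]]]] _ _ _ _ _ _ _ _ eps Heps.
have hd : (1 < d)%N by apply/ssrnat.leP.
have hk : (0 < k)%N by case: k Hk {HT}.
exact: (final_core d k c0 z0 a M r eps hd hk Hr Ha Heps HT).
Qed.
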